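(* Let $\lambda$ be a partition and $\pi$ an $R_\lambda$-permutation. If $\pi$ is $R_\lambda$-312-avoiding, then $\mathcal{D}_\lambda(\pi)=[Y_\lambda(\pi)]$, i.e. $\mathcal{D}_\lambda(\pi)=\{T\in\mathcal{T}_\lambda: T\le Y_\lambda(\pi)\}$.
   Context: Fix $n\ge1$; $[m]=\{1,\dots,m\}$. A partition is $\lambda=(\lambda_1\ge\cdots\ge\lambda_n\ge0)\in\mathbb{Z}^n$, with boxes $(j,i)$ (column $j$, row $i$), $1\le j\le\lambda_1$, $1\le i\le\zeta_j:=\#\{i:\lambda_i\ge j\}$; $R_\lambda:=\{\zeta_j:\zeta_j<n\}$ with elements $q_1<\dots<q_r$, $q_0:=0$, $q_{r+1}:=n$. An $R_\lambda$-permutation is a permutation $\pi$ of $[n]$ (one-line notation) strictly increasing on each index set $\{q_{h-1}+1,\dots,q_h\}$; it is $R_\lambda$-312-containing if there exist $h\in[r-1]$ and $1\le a\le q_h<b\le q_{h+1}<c\le n$ with $\pi_b<\pi_c<\pi_a$, and $R_\lambda$-312-avoiding otherwise. A tableau of shape $\lambda$ fills the boxes with values in $[n]$, strictly increasing down columns and weakly increasing along rows; $\mathcal{T}_\lambda$ is their set, ordered entrywise. The $\lambda$-key $Y_\lambda(\pi)$ is the tableau whose column $j$ consists of $\{\pi_1,\dots,\pi_{\zeta_j}\}$ in increasing order. Scanning tableau: the earliest weakly increasing subsequence (EWIS) of $x_1,x_2,\dots$ is $x_{i_1},x_{i_2},\dots$ with $i_1=1$ and $i_u$ the smallest index $>i_{u-1}$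 with $x_{i_u}\ge x_{i_{u-1}}$. For $T\in\mathcal{T}_\lambda$ and $l\in[\lambda_1]$, column $l$ of $S(T)$ is computed as follows: consider the boxes of $T$ in columns $l,\dots,\lambda_1$, initially unmarked; for $k=\zeta_l,\zeta_l-1,\dots,1$ in turn, form the sequence of lowest unmarked entries of columns $l,l+1,\dots$ (left to right, over columns still having unmarked boxes), take its EWIS, mark the contributing boxes, and set the entry of $S(T)$ at column $l$, row $k$ to the last term of the EWIS. The set of Demazure tableaux is $\mathcal{D}_\lambda(\pi):=\{T\in\mathcal{T}_\lambda:S(T)\le Y_\lambda(\pi)\}$. *)

(* Defs.v *)
From mathcomp Require Import all_boot.
Set Implicit Arguments. Unset Strict Implicit. Unset Printing Implicit Defensive.

Definition is_partition (n : nat) (lam : seq nat) : Prop :=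
  size lam = n /\ sorted geq lam.

Definition lam1 (lam : seq nat) : nat := nth 0 lam 0.

Definition zeta (lam : seq nat) (j : nat) : nat := count (fun x => j <= x) lam.

(* (j,i) is a box: column j, row i, 1-indexed *)
Definition is_box (lam : seq nat) (j i : nat) : Prop :=
  1 <= j <= lam1 lam /\ 1 <= i <= zeta lam j.

(* Tableaux are represented as lists of columns (top to bottom);
   entry T j i is the entry in column j, row i (1-indexed). *)
Definition entry (T : seq (seq nat)) (j i : nat) : nat :=
  nth 0 (nth [::] T j.-1) i.-1.

Definition is_tableau (n : nat) (lam : seq nat) (T : seq (seq nat)) : Prop :=
  size T = lam1 lam /\
  (forall j, 1 <= j <= lam1 lam -> size (nth [::] T j.-1) = zeta lam j) /\
  (forall j i, is_box lam j i -> 1 <= entry T j i <= n) /\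
  (forall j i, is_box lam j i -> is_box lam j i.+1 ->
      entry T j i < entry T j i.+1) /\
  (forall j i, is_box lam j i -> is_box lam j.+1 i ->
      entry T j i <= entry T j.+1 i).

Definition tab_le (lam : seq nat) (T U : seq (seq nat)) : Prop :=
  forall j i, is_box lam j i -> entry T j i <= entry U j i.

Definition pi_at (pi : seq nat) (i : nat) : nat := nth 0 pi i.-1.

Definition inR (n : nat) (lam : seq nat) (q : nat) : bool :=
  has (fun j => (zeta lam j == q) && (q < n)) (iota 1 (lam1 lam)).

Definition Rlist (n : nat) (lam : seq nat) : seq nat :=
  sort leq (undup [seq zeta lam j | j <- iota 1 (lam1 lam) & zeta lam j < n]).

Definition rR (n : nat) (lam : seq nat) : nat := size (Rlist n lam).

(* q_h for 1 <= h <= r (q_0 = 0) *)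
Definition qq (n : nat) (lam : seq nat) (h : nat) : nat :=
  nth 0 (0 :: Rlist n lam) h.

(* pi is a permutation of [n] strictly increasing on each block
   {q_{h-1}+1, ..., q_h}: positions a < b lie in the same block iff
   no q in R_lambda satisfies a <= q < b. *)
Definition R_perm (n : nat) (lam : seq nat) (pi : seq nat) : Prop :=
  perm_eq pi (iota 1 n) /\
  (forall a b, 1 <= a -> a < b -> b <= n ->
     (forall q, inR n lam q -> ~~ (a <= q < b)) ->
     pi_at pi a < pi_at pi b).

Definition R312_containing (n : nat) (lam : seq nat) (pi : seq nat) : Prop :=
  exists h, 1 <= h <= (rR n lam).-1 /\
  exists a b c,
    [/\ 1 <= a <= qq n lam h, qq n lam h < b <= qq n lam h.+1,
        qq n lam h.+1 < c <= n &
        pi_at pi b < pi_at pi c < pi_at pi a].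

Definition key (lam : seq nat) (pi : seq nat) : seq (seq nat) :=
  [seq sort leq (take (zeta lam j) pi) | j <- iota 1 (lam1 lam)].

(* Columns are seqs of the unmarked entries (top to bottom); marking a
   box always marks the lowest unmarked entry, i.e. removes the last one. *)
Definition droplast (c : seq nat) : seq nat := take (size c).-1 c.

(* Given current EWIS value v, continue the EWIS over the remaining
   columns' lowest entries; returns updated columns and the last term. *)
Fixpoint ewis_go (v : nat) (cs : seq (seq nat)) : seq (seq nat) * nat :=
  match cs with
  | [::] => ([::], v)
  | c :: cs' =>
      let x := last 0 c in
      if v <= x then
        let: (r, w) := ewis_go x cs' in (droplast c :: r, w)
      else
        let: (r, w) := ewis_go v cs' in (c :: r, w)
  end.

(* One step: form the sequence of lowest unmarked entries of columns still
   having unmarked boxes, take its EWIS, mark, return the last term. *)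
Definition scan_step (cs : seq (seq nat)) : seq (seq nat) * nat :=
  match [seq c <- cs | size c != 0] with
  | [::] => ([::], 0)
  | c0 :: rest =>
      let: (r, w) := ewis_go (last 0 c0) rest in (droplast c0 :: r, w)
  end.

(* values for k = k0, k0-1, ..., 1, in that order *)
Fixpoint scan_iter (k : nat) (cs : seq (seq nat)) : seq nat :=
  match k with
  | 0 => [::]
  | k'.+1 => let: (cs', w) := scan_step cs in w :: scan_iter k' cs'
  end.

Definition scanning (lam : seq nat) (T : seq (seq nat)) : seq (seq nat) :=
  [seq rev (scan_iter (zeta lam l) (drop l.-1 T)) | l <- iota 1 (lam1 lam)].

Definition demazure (n : nat) (lam pi : seq nat) (T : seq (seq nat)) : Prop :=
  is_tableau n lam T /\ tab_le lam (scanning lam T) (key lam pi).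

Definition below_key (n : nat) (lam pi : seq nat) (T : seq (seq nat)) : Prop :=
  is_tableau n lam T /\ tab_le lam T (key lam pi).

(* Main.v *)
Require Import Defs.
From mathcomp Require Import all_boot zify.
Set Implicit Arguments. Unset Strict Implicit. Unset Printing Implicit Defensive.

Lemma count_lt0 (s : seq nat) a x : all (leq a) s -> x <= a -> count (fun b => b < x) s = 0.
Proof.
move=> H xa; elim: s H => //= b s IH /andP[ab /IH ->].
by rewrite ltnNge (leq_trans xa ab).
Qed.

Lemma nth_lt_count (s : seq nat) i x : sorted leq s -> i < size s ->
  (nth 0 s i < x) = (i < count (fun a => a < x) s).
Proof.
elim: s i => //= a s IH i Hs.
have Ha := order_path_min leq_trans Hs.
have Hs' := path_sorted Hs.
case: i => [|i] /= Hi.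
  case: (ltnP a x) => ax //=. by rewrite (count_lt0 Ha ax).
case: (ltnP a x) => ax /=.
  by rewrite add1n ltnS IH.
rewrite (count_lt0 Ha ax) ltn0; apply/negbTE; rewrite -leqNgt.
apply: leq_trans ax _. by move/allP: Ha; apply; rewrite mem_nth.
Qed.

Definition cntA (A : seq nat) x := count (fun a => a < x) A.

Lemma cnt_mono A x y : x <= y -> cntA A x <= cntA A y.
Proof. move=> xy; apply: sub_count => a /= ax; exact: leq_trans ax xy. Qed.

Lemma cnt_mem A x y : x \in A -> x < y -> cntA A x < cntA A y.
Proof.
rewrite /cntA; elim: A => //= a A IH; rewrite in_cons => /orP[/eqP <-|xA] xy.
  rewrite ltnn xy /= add0n add1n ltnS; exact: cnt_mono (ltnW xy).
have := IH xA xy.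
case: (ltnP a x) => ax /=; first by rewrite (ltn_trans ax xy).
by rewrite !add0n => H; apply: leq_trans H _; rewrite leq_addl.
Qed.

Definition Rc (p c : seq nat) : bool :=
  (size c <= size p) && all (fun r => nth 0 p r <= nth 0 c r) (iota 0 (size c)).

Lemma RcP p c : reflect (size c <= size p /\ forall r, r < size c -> nth 0 p r <= nth 0 c r) (Rc p c).
Proof.
apply: (iffP andP) => [[H1 /allP H2]|[H1 H2]]; split => //.
  by move=> r Hr; apply: H2; rewrite mem_iota.
by apply/allP => r; rewrite mem_iota add0n => /andP[_]; apply: H2.
Qed.

Lemma Rc_trans : transitive Rc.
Proof.
move=> b a c /RcP[s1 h1] /RcP[s2 h2]; apply/RcP; split; first exact: leq_trans s2 s1.
move=> r hr; apply: leq_trans (h2 _ hr); apply: h1; exact: leq_trans hr s2.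
Qed.

Lemma size_droplast c : size (droplast c) = (size c).-1.
Proof. by rewrite /droplast size_take; case: (size c) => //= n; rewrite ltnSn. Qed.

Lemma nth_droplast c r : r < (size c).-1 -> nth 0 (droplast c) r = nth 0 c r.
Proof. by move=> h; rewrite /droplast nth_take. Qed.

Lemma Rc_dr p c : Rc p c -> Rc p (droplast c).
Proof.
move=> /RcP[s h]; apply/RcP; rewrite size_droplast; split.
  exact: leq_trans (leq_pred _) s.
move=> r hr; rewrite nth_droplast //; apply: h; exact: leq_trans hr (leq_pred _).
Qed.

Lemma Rc_drdr p c : Rc p c -> Rc (droplast p) (droplast c).
Proof.
move=> /RcP[s h]; apply/RcP; rewrite !size_droplast; split.
  by rewrite -!subn1 leq_sub2r.
move=> r hr.
have hr1 : r < (size p).-1 by apply: leq_trans hr _; rewrite -!subn1 leq_sub2r.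
have hr2 : r < size c := leq_trans hr (leq_pred _).
by rewrite !nth_droplast //; apply: h.
Qed.

Lemma Rc_last p c : Rc p c -> size c = size p -> last 0 p <= last 0 c.
Proof.
move=> /RcP[_ h] e; rewrite -!nth_last e.
case E: (size p) e h => [|s] e h //=; first by rewrite (nth_default 0 (s:=p)) ?E.
by apply: h; rewrite e.
Qed.

Definition goodc (A : seq nat) (k : nat) (c : seq nat) : Prop :=
  [/\ size c <= k,
      (forall r, r.+1 < size c -> nth 0 c r < nth 0 c r.+1),
      (forall r, r < size c -> cntA A (nth 0 c r) <= r + k - size c) &
      (forall r, r < size c -> nth 0 c r \notin A -> cntA A (nth 0 c r) <= r)].

Lemma good_dr A k c : goodc A k.+1 c -> goodc A k (droplast c).
Proof.
case=> h1 h2 h3 h4; rewrite /goodc size_droplast; split.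
- by rewrite -ltnS; case: (size c) h1.
- move=> r hr; rewrite !nth_droplast //; last exact: ltnW.
  apply: h2; exact: leq_trans hr (leq_pred _).
- move=> r hr; rewrite nth_droplast //.
  have hr' : r < size c := leq_trans hr (leq_pred _).
  apply: leq_trans (h3 _ hr') _.
  by case: (size c) hr => //= s _; rewrite addnS subSS.
- move=> r hr; rewrite nth_droplast //; apply: h4; exact: leq_trans hr (leq_pred _).
Qed.

Lemma cnt_last A k c : goodc A k c -> 0 < k -> cntA A (last 0 c) <= k.-1.
Proof.
case=> h1 _ h3 _ k0; rewrite -nth_last.
case E: (size c) => [|s] /=.
  rewrite nth_default ?E //.
  have -> : cntA A 0 = 0 by rewrite /cntA; clear; elim: A.
  done.
have := h3 s; rewrite E ltnSn => /(_ isT); rewrite subnS addKn.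
by [].
Qed.

Lemma propag A k c v :
  (forall r, r.+1 < size c -> nth 0 c r < nth 0 c r.+1) ->
  (forall r, r < size c -> nth 0 c r \notin A -> cntA A (nth 0 c r) <= r) ->
  size c < k -> last 0 c < v -> cntA A v <= k.-1 ->
  forall r, r < size c -> cntA A (nth 0 c r) <= r + k.-1 - size c.
Proof.
move=> h2 h4 sk lv cv r hr; rewrite leqNgt; apply/negP => Hf.
have Hf' : r + k - size c <= cntA A (nth 0 c r) by lia.
have inA : forall r, r < size c -> r + k - size c <= cntA A (nth 0 c r) -> nth 0 c r \in A.
  move=> r' hr' hf'; apply/negPn/negP => nA; have := h4 _ hr' nA; lia.
have [d Hd] : exists d, r + d = (size c).-1 by exists ((size c).-1 - r); lia.
elim: d r hr Hf' Hd {Hf} => [|d IH] r hr Hf Hd.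
  have xA := inA _ hr Hf.
  have e : nth 0 c r = last 0 c by rewrite -nth_last -Hd addn0.
  have lv' : nth 0 c r < v by rewrite e.
  have := cnt_mem xA lv'; lia.
have hr1 : r.+1 < size c by lia.
apply: (IH r.+1 hr1) => //; last by lia.
have := cnt_mem (inA _ hr Hf) (h2 _ hr1); lia.
Qed.

Lemma ewis_main A k cs : forall p b v,
  0 < k ->
  sorted Rc (p :: cs) ->
  (if b then v = last 0 p else last 0 p < v) ->
  (~~ b -> size p < k) ->
  size p <= k ->
  cntA A v <= k.-1 ->
  (forall c, c \in cs -> goodc A k c) ->
  [/\ sorted Rc ((if b then droplast p else p) :: (ewis_go v cs).1),
      cntA A (ewis_go v cs).2 <= k.-1 &
      forall c, c \in (ewis_go v cs).1 -> goodc A k.-1 c].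
Proof.
elim: cs => [|c cs IH] p b v k0 Hs Hb Hnb Hp Hv Hg /=; first by split.
have Hc : goodc A k c by apply: Hg; rewrite mem_head.
have Hg' : forall c', c' \in cs -> goodc A k c' by move=> c' h; apply: Hg; rewrite in_cons h orbT.
move: Hs => /= /andP[Rpc Hs].
case: Hc => c1 c2 c3 c4.
case vc: (v <= last 0 c).
  case E: (ewis_go (last 0 c) cs) => [r w].
  have [] := IH c true (last 0 c) k0 Hs erefl (fun h => False_ind _ (negP h isT)) c1 (cnt_last (And4 c1 c2 c3 c4) k0) Hg'.
  rewrite E /= => S1 S2 S3; split => //.
    rewrite /=; apply/andP; split => //; case: b Hb {Hnb} => _; [exact: Rc_drdr | exact: Rc_dr].
  move=> c'; rewrite in_cons => /orP[/eqP ->|]; last exact: S3.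
  case: k k0 {IH Hnb Hp Hv Hg Hg' S2 S3} c1 c2 c3 c4 => // k _ c1 c2 c3 c4.
  exact: good_dr.
have sck : size c < k.
  move/RcP: (Rpc) => [sz _]; case: b Hb Hnb => Hb Hnb; last first.
    exact: leq_ltn_trans sz (Hnb isT).
  rewrite ltn_neqAle c1 andbT; apply/negP => /eqP e.
  have e' : size c = size p by apply/eqP; rewrite eqn_leq sz e Hp.
  have := Rc_last Rpc e'; rewrite -Hb leqNgt ltnNge vc //.
have lv : last 0 c < v by rewrite ltnNge vc.
case E: (ewis_go v cs) => [r w].
have [] := IH c false v k0 Hs lv (fun _ => sck) c1 Hv Hg'.
rewrite E /= => S1 S2 S3; split => //.
  rewrite /=; apply/andP; split => //; case: b Hb {Hnb} => Hb //.
  move/RcP: Rpc => [sz h]; apply/RcP; rewrite size_droplast; split.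
    have : size c != size p.
      apply/negP => /eqP e; have := Rc_last (introT (RcP _ _) (conj sz h)) e.
      by rewrite -Hb leqNgt lv.
    by move=> ne; rewrite -ltnS; case: (size p) sz ne => // s' sz ne; rewrite ltn_neqAle ne sz.
  move=> r' hr'; rewrite nth_droplast; first exact: h.
  have : size c != size p.
    apply/negP => /eqP e; have := Rc_last (introT (RcP _ _) (conj sz h)) e.
    by rewrite -Hb leqNgt lv.
  lia.
move=> c'; rewrite in_cons => /orP[/eqP ->|]; last exact: S3.
split.
- lia.
- exact: c2.
- exact: propag c2 c4 sck lv Hv.
- exact: c4.
Qed.

Lemma filter_head (c0 : seq nat) rest : size c0 != 0 ->
  [seq c <- c0 :: rest | size c != 0] = c0 :: [seq c <- rest | size c != 0].
Proof. by move=> h /=; rewrite h. Qed.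

Lemma step_main A k c0 rest :
  size c0 = k.+1 -> sorted Rc (c0 :: rest) ->
  (forall c, c \in c0 :: rest -> goodc A k.+1 c) ->
  exists c0' rest', (scan_step (c0 :: rest)).1 = c0' :: rest' /\ size c0' = k /\
    sorted Rc (c0' :: rest') /\ (forall c, c \in c0' :: rest' -> goodc A k c) /\
    cntA A (scan_step (c0 :: rest)).2 <= k.
Proof.
move=> sz Hs Hg.
rewrite /scan_step filter_head ?sz //.
have Hs' : sorted Rc (c0 :: [seq c <- rest | size c != 0]).
  by rewrite -filter_head ?sz //; apply: sorted_filter => //; exact: Rc_trans.
have Hc0 : goodc A k.+1 c0 by apply: Hg; rewrite mem_head.
have [] := ewis_main (b:=true) (v:=last 0 c0) (A:=A) (k:=k.+1) (ltn0Sn k) Hs' erefl (fun h => False_ind _ (negP h isT)) (eq_leq sz) (cnt_last Hc0 (ltn0Sn k)).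
  by move=> c; rewrite mem_filter => /andP[_ h]; apply: Hg; rewrite in_cons h orbT.
case E: (ewis_go (last 0 c0) [seq c <- rest | size c != 0]) => [r w] /= S1 S2 S3.
exists (droplast c0), r; split => //; split; first by rewrite size_droplast sz.
split => //; split => //.
move=> c; rewrite in_cons => /orP[/eqP ->|]; last exact: S3.
exact: good_dr.
Qed.

Lemma size_scan k cs : size (scan_iter k cs) = k.
Proof. by elim: k cs => //= k IH cs; case: (scan_step cs) => a b /=; rewrite IH. Qed.

Lemma scan_main A k : forall c0 rest, size c0 = k -> sorted Rc (c0 :: rest) ->
  (forall c, c \in c0 :: rest -> goodc A k c) ->
  forall t, t < k -> cntA A (nth 0 (scan_iter k (c0 :: rest)) t) <= k.-1 - t.
Proof.
elim: k => // k IH c0 rest sz Hs Hg t ht.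
have [c0' [rest' [E1 [E2 [E3 [E4 E5]]]]]] := step_main sz Hs Hg.
rewrite /=; case E: (scan_step (c0 :: rest)) => [cs' w].
rewrite E /= in E1 E5; case: t ht => [|t] ht /=; first by rewrite subn0.
rewrite E1; apply: leq_trans (IH _ _ E2 E3 E4 t ht) _; lia.
Qed.

Lemma ewis_ge v cs : v <= (ewis_go v cs).2.
Proof.
elim: cs v => //= c cs IH v; case: ifP => h.
  case E: (ewis_go (last 0 c) cs) => [r w] /=; have := IH (last 0 c); rewrite E /= => H.
  exact: leq_trans h H.
by case E: (ewis_go v cs) => [r w] /=; have := IH v; rewrite E.
Qed.

Lemma scan_ge k : forall c0 rest, size c0 = k ->
  forall t, t < k -> nth 0 c0 (k.-1 - t) <= nth 0 (scan_iter k (c0 :: rest)) t.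
Proof.
elim: k => // k IH c0 rest sz t ht /=.
rewrite /scan_step filter_head ?sz //.
case E: (ewis_go (last 0 c0) [seq c <- rest | size c != 0]) => [r w] /=.
case: t ht => [|t] ht /=.
  rewrite subn0; have -> : k = (size c0).-1 by rewrite sz.
  by rewrite nth_last; have := ewis_ge (last 0 c0) [seq c <- rest | size c != 0]; rewrite E.
have sz' : size (droplast c0) = k by rewrite size_droplast sz.
apply: leq_trans (IH _ _ sz' t ht).
rewrite nth_droplast; last by rewrite sz /=; lia.
by have -> : k - t.+1 = k.-1 - t by lia.
Qed.

Lemma zeta_mono lam l j : l <= j -> zeta lam j <= zeta lam l.
Proof. move=> lj; apply: sub_count => x /=; exact: leq_trans lj. Qed.

Lemma zeta_le lam j : zeta lam j <= size lam.
Proof. exact: count_size. Qed.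

Lemma inRlist n lam j : 1 <= j <= lam1 lam -> zeta lam j < n -> zeta lam j \in Rlist n lam.
Proof.
move=> hj hz; rewrite /Rlist mem_sort mem_undup; apply: map_f.
by rewrite mem_filter hz mem_iota; lia.
Qed.

Lemma mid_big n lam pi (Hpi : R_perm n lam pi) (Hav : ~ R312_containing n lam pi) l j x a b :
  1 <= l -> l <= j -> j <= lam1 lam -> zeta lam l < n -> 1 <= x <= n ->
  x \notin take (zeta lam l) pi ->
  a \in take (zeta lam j) pi -> x < a ->
  b \in drop (zeta lam j) (take (zeta lam l) pi) -> x <= b.
Proof.
case: Hpi => Hperm _ hl lj jL zl hx xA aB xa bM.
rewrite leqNgt; apply/negP => bx; apply: Hav.
have szpi : size pi = n by rewrite (perm_size Hperm) size_iota.
have zjl := zeta_mono lam lj.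
set zj := zeta lam j in aB bM zjl *; set zl' := zeta lam l in xA bM zjl zl *.
have [ia [ia_lt ea]] : exists i, i < zj /\ nth 0 pi i = a.
  exists (index a (take zj pi)); have hi : index a (take zj pi) < size (take zj pi) by rewrite index_mem.
  have hi2 : index a (take zj pi) < zj by move: hi; rewrite size_take; case: ifP; lia.
  by split => //; rewrite -(nth_take 0 hi2) nth_index.
have [ib [ib_lt1 [ib_lt2 eb]]] : exists i, zj <= i /\ i < zl' /\ nth 0 pi i = b.
  have hi : index b (drop zj (take zl' pi)) < size (drop zj (take zl' pi)) by rewrite index_mem.
  exists (zj + index b (drop zj (take zl' pi))).
  move: (hi); rewrite size_drop size_take; have -> : zl' < size pi = true by lia.
  move=> hi'; split; first by lia. split; first by lia.
  have hi3 : zj + index b (drop zj (take zl' pi)) < zl' by lia.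
  by rewrite -(nth_take 0 hi3) -nth_drop nth_index.
have xpi : x \in pi by rewrite (perm_mem Hperm) mem_iota; lia.
have [ic [ic_lt1 [ic_lt2 ec]]] : exists i, zl' <= i /\ i < n /\ nth 0 pi i = x.
  exists (index x pi); have hi : index x pi < size pi by rewrite index_mem.
  split; last by split; [lia | exact: nth_index].
  rewrite leqNgt; apply/negP => hlt; move/negP: xA; apply.
  by rewrite -(nth_index 0 xpi) -(nth_take 0 hlt) mem_nth // size_take szpi; case: ifP; lia.
set s := Rlist n lam.
have ss : sorted leq s by apply: sort_sorted; exact: leq_total.
have zjs : zj \in s by apply: inRlist; lia.
have zls : zl' \in s by apply: inRlist; lia.
set h := count (fun q => q < ib.+1) s.
have Hlt := fun i => nth_lt_count ib.+1 ss (i := i).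
have ij := nth_index 0 zjs; have il := nth_index 0 zls.
have ijs : index zj s < size s by rewrite index_mem.
have ils : index zl' s < size s by rewrite index_mem.
have h1 : index zj s < h by rewrite -Hlt // ij; lia.
have h2 : h <= index zl' s by rewrite leqNgt -Hlt // il; lia.
have hq1 : nth 0 s h.-1 < ib.+1 by rewrite Hlt; lia.
have hq2 : ib.+1 <= nth 0 s h by rewrite leqNgt Hlt; lia.
have m1 : zj <= nth 0 s h.-1.
  rewrite -{1}ij; apply: (sorted_leq_nth leq_trans leqnn 0 ss); rewrite ?inE; lia.
have m2 : nth 0 s h <= zl'.
  rewrite -[X in _ <= X]il; apply: (sorted_leq_nth leq_trans leqnn 0 ss); rewrite ?inE; lia.
exists h; split.
  rewrite /rR -/s; lia.
have qh : qq n lam h = nth 0 s h.-1 by rewrite /qq -/s; case: (h) h1 => //.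
have qh1 : qq n lam h.+1 = nth 0 s h by rewrite /qq.
exists ia.+1, ib.+1, ic.+1; rewrite qh qh1 /pi_at /= ea eb ec; split; try lia.
Qed.

Lemma entry_scan lam T l k : 1 <= l <= lam1 lam -> 1 <= k <= zeta lam l ->
  entry (scanning lam T) l k = nth 0 (scan_iter (zeta lam l) (drop l.-1 T)) (zeta lam l - k).
Proof.
move=> hl hk; rewrite /entry /scanning (nth_map 0); last by rewrite size_iota; lia.
rewrite nth_iota; last by lia.
have -> : 1 + l.-1 = l by lia.
rewrite nth_rev size_scan; last by lia.
congr nth; lia.
Qed.

Lemma entry_key lam pi j i : 1 <= j <= lam1 lam ->
  entry (key lam pi) j i = nth 0 (sort leq (take (zeta lam j) pi)) i.-1.
Proof.
move=> hj; rewrite /entry /key (nth_map 0); last by rewrite size_iota; lia.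
rewrite nth_iota; last by lia.
by have -> : 1 + j.-1 = j by lia.
Qed.

Lemma count0_ge (s : seq nat) x : (forall b, b \in s -> x <= b) -> count (fun b => b < x) s = 0.
Proof.
elim: s => //= b s IH H; rewrite IH; last by move=> c hc; apply: H; rewrite in_cons hc orbT.
by rewrite ltnNge H ?mem_head.
Qed.

Lemma mem_drop_col (T : seq (seq nat)) m c : c \in drop m T ->
  exists i, m <= i < size T /\ c = nth [::] T i.
Proof.
move=> h; have hi : index c (drop m T) < size (drop m T) by rewrite index_mem.
exists (m + index c (drop m T)); rewrite size_drop in hi; split; first by lia.
by rewrite -nth_drop nth_index.
Qed.

Unset Implicit Arguments.

Theorem theorem6p3 (n : nat) (hn : 1 <= n) (lam pi : seq nat)
  (Hlam : is_partition n lam) (Hpi : R_perm n lam pi)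
  (Havoid : ~ R312_containing n lam pi) :
  forall T : seq (seq nat), demazure n lam pi T <-> below_key n lam pi T.
Proof.
move=> T; case: (Hlam) => szlam _.
have szpi : size pi = n by case: Hpi => Hp _; rewrite (perm_size Hp) size_iota.
have common : forall l k, is_tableau n lam T -> is_box lam l k ->
   [/\ drop l.-1 T = nth [::] T l.-1 :: drop l T,
       size (nth [::] T l.-1) = zeta lam l &
       entry (scanning lam T) l k = nth 0 (scan_iter (zeta lam l) (nth [::] T l.-1 :: drop l T)) (zeta lam l - k)].
  move=> l k [szT [szc _]] [hl hk].
  have e : drop l.-1 T = nth [::] T l.-1 :: drop l T.
    rewrite (drop_nth [::]); last by rewrite szT; lia.
    by have -> : l.-1.+1 = l by lia.
  by split; [ | apply: szc | rewrite entry_scan // e].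
split => [[HT HS]|[HT HY]]; split => // l k Hb.
  have [e sz0 es] := common l k HT Hb.
  apply: leq_trans (HS l k Hb); rewrite es.
  case: Hb => hl hk.
  have := scan_ge (drop l T) sz0 (t := zeta lam l - k) ltac:(lia).
  by have -> : (zeta lam l).-1 - (zeta lam l - k) = k.-1 by lia.
have [e sz0 es] := common l k HT Hb.
case: (HT) => [szT [szc [rng [colinc rowwk]]]].
case: (Hb) => hl hk.
rewrite es entry_key //.
set zl := zeta lam l.
set A := sort leq (take zl pi).
have zln : zl <= n by rewrite -szlam; exact: zeta_le.
have szA : size A = zl by rewrite size_sort size_takel // szpi.
have sA : sorted leq A by apply: sort_sorted; exact: leq_total.
have Hs : sorted Rc (nth [::] T l.-1 :: drop l T).
  rewrite -e; apply/(sortedP [::]) => i; rewrite size_drop => hi.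
  rewrite !nth_drop; set j0 := l.-1 + i.
  have hj1 : j0.+2 <= lam1 lam by rewrite -szT; lia.
  have e1 := szc j0.+1 ltac:(lia); have e2 := szc j0.+2 ltac:(lia).
  have ej : l.-1 + i.+1 = j0.+1 by rewrite /j0; lia.
  rewrite ej; apply/RcP; rewrite e1 e2 /=; split; first exact: zeta_mono.
  move=> r hr; have := rowwk j0.+1 r.+1.
  have zm := zeta_mono lam (leqnSn j0.+1).
  rewrite /entry /=; apply; split; lia.
have Hg : forall c, c \in nth [::] T l.-1 :: drop l T -> goodc A zl c.
  rewrite -e => c /mem_drop_col [j0 [hj0 ->]].
  set j := j0.+1.
  have hj : 1 <= j <= lam1 lam by rewrite -szT; lia.
  have ljj : l <= j by lia.
  have ez := szc j hj; rewrite /= in ez.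
  have zjl : zeta lam j <= zl := zeta_mono lam ljj.
  set zj := zeta lam j in ez zjl.
  set B := sort leq (take zj pi).
  have szB : size B = zj by rewrite size_sort size_takel // szpi; lia.
  have sB : sorted leq B by apply: sort_sorted; exact: leq_total.
  have Ebox : forall r, r < zj -> is_box lam j r.+1 by move=> r hr; split; lia.
  have xB : forall r, r < zj -> count (fun a => a < nth 0 (nth [::] T j0) r) B <= r.
    move=> r hr; have := HY j r.+1 (Ebox r hr); rewrite entry_key // /entry /= -/B.
    by rewrite leqNgt nth_lt_count ?szB // -leqNgt.
  have split_take : take zl pi = take zj pi ++ drop zj (take zl pi).
    by rewrite -{1}(cat_take_drop zj (take zl pi)) take_takel.
  have cntE : forall x, cntA A x = count (fun a => a < x) B + count (fun a => a < x) (drop zj (take zl pi)).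
    move=> x; rewrite /cntA /A /B !(permP (permEl (perm_sort _ _))) {1}split_take count_cat //.
  rewrite /goodc ez; split => //.
  - move=> r hr; have := colinc j r.+1 (Ebox r (ltnW hr)) (Ebox r.+1 hr).
    by rewrite /entry.
  - move=> r hr; rewrite cntE; have := xB r hr.
    have := count_size (fun a => a < nth 0 (nth [::] T j0) r) (drop zj (take zl pi)).
    rewrite size_drop size_takel ?szpi //; lia.
  - move=> r hr xA; rewrite cntE.
    set x := nth 0 (nth [::] T j0) r in xA *.
    have xr : 1 <= x <= n by have := rng j r.+1 (Ebox r hr); rewrite /entry.
    have zl_n : zl < n.
      rewrite ltn_neqAle zln andbT; apply/negP => /eqP ezl; move/negP: xA; apply.
      rewrite /A mem_sort ezl -szpi take_size.
      by case: Hpi => Hp _; rewrite (perm_mem Hp) mem_iota; lia.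
    set a := nth 0 B r.
    have aB : a \in take zj pi by rewrite -(mem_sort leq) mem_nth // szB.
    have xa : x < a.
      have := HY j r.+1 (Ebox r hr); rewrite entry_key // /entry /= -/B -/x -/a.
      rewrite leq_eqVlt => /orP[/eqP exa|] //; move/negP: xA; case.
      rewrite /A mem_sort exa; move: aB; rewrite -(take_takel pi zjl).
      exact: mem_take.
    suff -> : count (fun b => b < x) (drop zj (take zl pi)) = 0 by rewrite addn0; exact: xB.
    apply: count0_ge => b hb; apply: (mid_big Hpi Havoid (l:=l) (j:=j) (a:=a)) => //; try lia.
    by move: xA; rewrite /A mem_sort.
have := scan_main (A:=A) sz0 Hs Hg (t := zl - k) ltac:(lia).
rewrite -/zl => H.
rewrite leqNgt nth_lt_count ?szA; last by lia.
  by move: H; rewrite /cntA; lia.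
exact: sA.
Qed.
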